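(* For every $\zeta=(\zeta^\alpha_i)\in\mathcal A^{\mathsf A}_{\mathsf I}$ there exists a unique family $(\phi_k)_{k\in\mathsf I}$, $\phi_k=(\phi^\alpha_k)\in\mathcal A^{\mathsf A}$, such that $$\zeta=\sum_{k\in\mathsf I}\varepsilon^k_{\phi_k}$$ (the sum is finite in each component, since $(\varepsilon^k_\phi)^\alpha_i=0$ unless $k\le i$), and it is given by $$\phi^\alpha_k=\sum_{i,j\in\mathsf I,\ i+j=k}(-1)^{|j|}\binom{k}{i}D_j\zeta^\alpha_i .$$ Thus $\mathcal A^{\mathsf A}_{\mathsf I}$ is $\mathsf I$-graded by the subspaces $\Phi^k$, $k\in\mathsf I$.
   Context: $\mathbb F\in\{\mathbb R,\mathbb C\}$, $m\in\mathbb N$, $\mathsf A$ a finite index set, $\mathsf I=\mathbb Z_+^m$, $|j|=j^1+\dots+j^m$, $k\le i$ componentwise, $\binom{k}{i}=\prod_\mu\binom{k^\mu}{i^\mu}$. Variables $x^\mu$ ($\mu=1,\dots,m$) on $\mathbb R^m$ and $u^\alpha_i$ ($\alpha\in\mathsf A$, $i\in\mathsf I$); $\mathcal A$ is the algebra of smooth $\mathbb F$-valued functions each depending on finitely many of these variables; $D_\mu=\partial_{x^\mu}+\sum_{\alpha,i}u^\alpha_{i+(\mu)}\partial_{u^\alpha_i}$ where $(\mu)$ is the multi-index with $1$ in position $\mu$; $D_j=D_1^{j^1}\cdots D_m^{j^m}$. $\mathcal A^{\mathsf A}$ is the space of tuples $(\phi^\alpha)_{\alpha\in\mathsf A}$ in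 $\mathcal A$, $\mathcal A^{\mathsf A}_{\mathsf I}$ the space of all families $(\zeta^\alpha_i)_{\alpha\in\mathsf A,i\in\mathsf I}$ in $\mathcal A$. For $k\in\mathsf I$, $\phi\in\mathcal A^{\mathsf A}$: $(\varepsilon^k_\phi)^\alpha_i=\binom{i}{k}D_{i-k}\phi^\alpha$ if $k\le i$ and $0$ otherwise, and $\Phi^k=\{\varepsilon^k_\phi\mid\phi\in\mathcal A^{\mathsf A}\}$. *)

(* Defs.v *)
From HB Require Import structures.
From mathcomp Require Import all_boot all_order all_algebra.
Set Implicit Arguments. Unset Strict Implicit. Unset Printing Implicit Defensive.
Import Order.TTheory GRing.Theory Num.Theory.
Local Open Scope ring_scope.

Definition mi (m : nat) := {ffun 'I_m -> nat}.

Definition mi_le m (k i : mi m) : bool := [forall mu, (k mu <= i mu)%N].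

Definition mi_add m (i j : mi m) : mi m := [ffun mu => (i mu + j mu)%N].
Definition mi_sub m (i k : mi m) : mi m := [ffun mu => (i mu - k mu)%N].

Definition mi_abs m (j : mi m) : nat := (\sum_(mu < m) j mu)%N.

Definition mi_binom m (k i : mi m) : nat := (\prod_(mu < m) 'C(k mu, i mu))%N.

Definition box m (n : nat) : seq (mi m) :=
  [seq [ffun mu => val (f mu)] | f : {ffun 'I_m -> 'I_n}].

(* a bound such that every k <= i lies in box (bound i) *)
Definition bound m (i : mi m) : nat := (\max_(mu < m) i mu).+1.

Section TotalDerivatives.
Variables (V : zmodType) (m : nat) (D : 'I_m -> {additive V -> V}).

Definition Dmi (j : mi m) : V -> V :=
  foldr (fun mu f => iter (j mu) (D mu) \o f) id (enum 'I_m).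

Variable (Aset : finType).

Definition eps (k : mi m) (phi : Aset -> V) (alpha : Aset) (i : mi m) : V :=
  if mi_le k i then (Dmi (mi_sub i k) (phi alpha)) *+ mi_binom i k else 0.

(* (sum_{k in I} eps^k_{phi_k})^alpha_i ; only terms with k <= i are nonzero,
   and all of them have k in box (bound i). *)
Definition eps_sum (phi : mi m -> Aset -> V) (alpha : Aset) (i : mi m) : V :=
  \sum_(k <- box m (bound i)) eps k (phi k) alpha i.

Definition phi_formula (zeta : Aset -> mi m -> V) (k : mi m) (alpha : Aset) : V :=
  \sum_(i <- box m (bound k))
    \sum_(j <- box m (bound k) | mi_add i j == k)
      (Dmi j (zeta alpha i)) *+ mi_binom k i *~ ((-1) ^+ mi_abs j).

End TotalDerivatives.

(* Main.v *)
Require Import Defs.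
From HB Require Import structures.
From mathcomp Require Import all_boot all_order all_algebra ring zify.
Import GRing.Theory.

Lemma mulbin L a K : L <= a -> a <= K ->
  'C(a, L) * 'C(K, a) = 'C(K, L) * 'C(K - L, a - L).
Proof.
move=> hLa haK.
have hLK : L <= K by exact: leq_trans haK.
have hP : 0 < L`! * (a - L)`! * (K - a)`! by rewrite !muln_gt0 !fact_gt0.
apply/eqP; rewrite -(eqn_pmul2r hP); apply/eqP.
have h1 := bin_fact haK. have h2 := bin_fact hLa. have h3 := bin_fact hLK.
have h4 : a - L <= K - L by rewrite leq_sub2r.
have h4' := bin_fact h4.
have e : K - L - (a - L) = K - a by rewrite subnBA // subnK // (leq_trans hLa).
rewrite e in h4'.
transitivity K`!.
  rewrite -h1 -h2.  ring.
rewrite -h3 -h4'. ring.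
Qed.

Local Open Scope ring_scope.

Lemma sum1D (N K L : nat) (s : nat -> int) : (K < N)%N ->
  \sum_(a < N) (('C(a,L) * 'C(K,a))%N%:R * s a) =
  if (L <= K)%N then ('C(K,L))%:R * \sum_(b < (K-L).+1) (('C(K-L,b))%:R * s (b+L)%N) else 0.
Proof.
move=> hKN.
rewrite -(big_mkord xpredT (fun a => ('C(a,L) * 'C(K,a))%N%:R * s a)).
rewrite (big_cat_nat _ (n:=K.+1)) //=.
rewrite [X in _ + X]big_nat_cond [X in _ + X]big1 ?addr0; last first.
  by move=> a /andP[/andP[ha _] _]; rewrite (bin_small ha) muln0 mul0r.
case: leqP => hLK; last first.
  rewrite big_nat_cond big1 // => a /andP[/andP[_ ha] _].
  by rewrite ltnS in ha; rewrite bin_small ?mul0n ?mul0r // (leq_ltn_trans ha).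
rewrite (big_cat_nat _ (n:=L)) //=; last by rewrite ltnW.
rewrite big_nat_cond big1 ?add0r; last first.
  by move=> a /andP[/andP[_ ha] _]; rewrite bin_small ?mul0n ?mul0r.
rewrite -{1}(add0n L) big_addn subSn // big_mkord mulr_sumr.
apply: eq_bigr => b _.
rewrite mulbin ?leq_addl // ?addnK ?natrM ?mulrA //.
have := ltn_ord b; rewrite ltnS leq_subRL //; lia.
Qed.

Lemma binsum_fin (K L : nat) (n : nat) : (L <= K)%N -> n = (K - L)%N ->
  ('C(K,L))%:R * ((n == 0%N)%:R : int) = (L == K)%:R.
Proof.
move=> hLK ->; case: (eqVneq L K) => [<-|hne]; first by rewrite subnn binn mulr1.
have hlt : (L < K)%N by rewrite ltn_neqAle hne hLK.
by rewrite subn_eq0 leqNgt hlt /= mulr0.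
Qed.

Lemma sumA1 (N K L : nat) : (K < N)%N ->
  \sum_(a < N) (('C(a,L) * 'C(K,a))%N%:R * (-1) ^+ (K - a)%N) = ((L == K)%:R : int).
Proof.
move=> hKN; rewrite (@sum1D _ _ _ (fun a => (-1) ^+ (K - a)%N)) //; case: leqP => hLK; last first.
  by rewrite (_ : (L == K) = false) // gtn_eqF.
rewrite -(@binsum_fin K L (K - L)%N) // -expr0n -[0 : int](addNr 1) exprDn.
congr (_ * _); apply: eq_bigr => b _.
rewrite expr1n mulr1 mulr_natl; congr (_ *+ _); congr (_ ^+ _); lia.
Qed.

Lemma sumB1 (N I L : nat) : (I < N)%N ->
  \sum_(a < N) (('C(a,L) * 'C(I,a))%N%:R * (-1) ^+ (a - L)%N) = ((L == I)%:R : int).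
Proof.
move=> hKN; rewrite (@sum1D _ _ _ (fun a => (-1) ^+ (a - L)%N)) //; case: leqP => hLK; last first.
  by rewrite (_ : (L == I) = false) // gtn_eqF.
rewrite -(@binsum_fin I L (I - L)%N) // -expr0n -[0 : int](subrr 1) exprDn.
congr (_ * _); apply: eq_bigr => b _.
rewrite expr1n mul1r mulr_natl addnK //.
Qed.
Section MI.
Variable m : nat.

Lemma mem_box n (l : mi m) : (l \in box m n) = [forall mu, (l mu < n)%N].
Proof.
apply/idP/forallP.
  by case/imageP=> f _ -> mu; rewrite ffunE ltn_ord.
move=> H; apply/imageP; exists [ffun mu => Ordinal (H mu)] => //.
by apply/ffunP=> mu; rewrite !ffunE.
Qed.

Lemma uniq_box n : uniq (box m n).
Proof.
rewrite map_inj_uniq ?enum_uniq // => f g /ffunP H.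
apply/ffunP=> mu; apply: val_inj; have := H mu; by rewrite !ffunE.
Qed.

Lemma bound_lt (k : mi m) mu : (k mu < bound k)%N.
Proof. rewrite /bound ltnS; exact: (@leq_bigmax 'I_m (fun nu => k nu) mu). Qed.

Lemma mi_leP (k i : mi m) : reflect (forall mu, k mu <= i mu)%N (mi_le k i).
Proof. exact: forallP. Qed.

Lemma binom0 (i l : mi m) : ~~ mi_le l i -> mi_binom i l = 0%N.
Proof.
rewrite /mi_le negb_forall => /existsP [mu]; rewrite -ltnNge => Hmu.
by rewrite /mi_binom (bigD1 mu) //= bin_small.
Qed.
End MI.
Section Dm.
Variables (V : zmodType) (m : nat) (D : 'I_m -> {additive V -> V}).
Hypothesis D_comm : forall (mu nu : 'I_m) (x : V), D mu (D nu x) = D nu (D mu x).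

Definition Fs (s : seq 'I_m) (j : mi m) : V -> V :=
  foldr (fun mu f => iter (j mu) (D mu) \o f) id s.

Lemma DmiE j : Dmi D j = Fs (enum 'I_m) j. Proof. by []. Qed.

Lemma iterB mu n (x y : V) : iter n (D mu) (x - y) = iter n (D mu) x - iter n (D mu) y.
Proof. by elim: n => //= n ->; rewrite raddfB. Qed.

Lemma FsB s j (x y : V) : Fs s j (x - y) = Fs s j x - Fs s j y.
Proof. by elim: s => //= mu s IH; rewrite IH iterB. Qed.

Lemma iter_comm mu nu a b (x : V) :
  iter a (D mu) (iter b (D nu) x) = iter b (D nu) (iter a (D mu) x).
Proof.
have H1 : forall c (y : V), D mu (iter c (D nu) y) = iter c (D nu) (D mu y).
  by move=> c y; elim: c => //= c <-; rewrite D_comm.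
by elim: a => //= a ->; rewrite H1.
Qed.

Lemma Fs_iter s j mu n (x : V) : Fs s j (iter n (D mu) x) = iter n (D mu) (Fs s j x).
Proof. by elim: s => //= nu s IH; rewrite IH iter_comm. Qed.

Lemma Fs_comp s a b (x : V) : Fs s a (Fs s b x) = Fs s (mi_add a b) x.
Proof.
elim: s => //= mu s IH.
by rewrite Fs_iter IH ffunE iterD.
Qed.

Lemma Fs0 s (x : V) : Fs s [ffun _ => 0%N] x = x.
Proof. elim: s => //= mu s IH; rewrite ffunE; exact: IH. Qed.

Lemma DmiB j (x y : V) : Dmi D j (x - y) = Dmi D j x - Dmi D j y.
Proof. exact: FsB. Qed.
Lemma Dmi_0 j : Dmi D j 0 = 0.
Proof. by have := DmiB j 0 0; rewrite !subrr. Qed.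
Lemma DmiN j x : Dmi D j (- x) = - Dmi D j x.
Proof. by rewrite -sub0r DmiB Dmi_0 sub0r. Qed.
Lemma DmiD j x y : Dmi D j (x + y) = Dmi D j x + Dmi D j y.
Proof. by rewrite -{1}[y]opprK DmiB DmiN opprK. Qed.
Lemma Dmi_sum j I (r : seq I) (P : pred I) (F : I -> V) :
  Dmi D j (\sum_(i <- r | P i) F i) = \sum_(i <- r | P i) Dmi D j (F i).
Proof. exact: (big_morph _ (DmiD j) (Dmi_0 j)). Qed.
Lemma DmiMn j x n : Dmi D j (x *+ n) = Dmi D j x *+ n.
Proof. by elim: n => [|n IH]; rewrite ?mulr0n ?Dmi_0 // !mulrS DmiD IH. Qed.
Lemma DmiMz j x (z : int) : Dmi D j (x *~ z) = Dmi D j x *~ z.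
Proof. by case: z => n; rewrite /intmul ?DmiN DmiMn. Qed.
Lemma Dmi_comp a b x : Dmi D a (Dmi D b x) = Dmi D (mi_add a b) x.
Proof. exact: Fs_comp. Qed.
Lemma Dmi0 x : Dmi D [ffun _ => 0%N] x = x.
Proof. exact: Fs0. Qed.
End Dm.

Section MI2.
Variable m : nat.

Lemma sum_box_prod N (G : 'I_m -> nat -> int) :
  \sum_(i <- box m N) \prod_mu G mu (i mu) = \prod_mu \sum_(a < N) G mu a.
Proof.
rewrite bigA_distr_bigA /box big_image /=.
by apply: eq_bigr => f _; apply: eq_bigr => mu _; rewrite ffunE.
Qed.

Lemma sgnE (j : mi m) : ((-1) ^+ mi_abs j : int) = \prod_mu (-1) ^+ (j mu).
Proof. by rewrite /mi_abs (big_morph _ (exprD (-1 : int)) (expr0 _)). Qed.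

Lemma prod_eq (l k : mi m) : \prod_mu ((l mu == k mu)%:R : int) = (l == k)%:R.
Proof.
case: (eqVneq l k) => [->|ne]; first by rewrite big1 // => mu _; rewrite eqxx.
have : ~~ [forall mu, l mu == k mu].
  apply: contra ne => /forallP H; apply/eqP/ffunP => mu; exact/eqP.
rewrite negb_forall => /existsP [mu hmu].
by rewrite (bigD1 mu) //= (negbTE hmu) mul0r.
Qed.

Lemma identA N (k l : mi m) : (forall mu, k mu < N)%N ->
  \sum_(i <- box m N) ((mi_binom i l * mi_binom k i)%:R * (-1) ^+ mi_abs (mi_sub k i) : int)
  = (l == k)%:R.
Proof.
move=> hk.
rewrite -prod_eq.
transitivity (\sum_(i <- box m N) \prod_mu
   ((('C(i mu, l mu) * 'C(k mu, i mu))%N%:R : int) * (-1) ^+ (k mu - i mu)%N)).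
  apply: eq_bigr => i _.
  rewrite big_split /= sgnE /mi_binom -big_split /= natr_prod.
  by congr (_ * _); apply: eq_bigr => mu _; rewrite ffunE.
rewrite (sum_box_prod N (fun mu a => (('C(a, l mu) * 'C(k mu, a))%N%:R : int) * (-1) ^+ (k mu - a)%N)).
apply: eq_bigr => mu _; exact: sumA1.
Qed.

Lemma identB N (i l : mi m) : (forall mu, i mu < N)%N ->
  \sum_(k <- box m N) ((mi_binom k l * mi_binom i k)%:R * (-1) ^+ mi_abs (mi_sub k l) : int)
  = (l == i)%:R.
Proof.
move=> hk.
rewrite -prod_eq.
transitivity (\sum_(k <- box m N) \prod_mu
   ((('C(k mu, l mu) * 'C(i mu, k mu))%N%:R : int) * (-1) ^+ (k mu - l mu)%N)).
  apply: eq_bigr => k _.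
  rewrite big_split /= sgnE /mi_binom -big_split /= natr_prod.
  by congr (_ * _); apply: eq_bigr => mu _; rewrite ffunE.
rewrite (sum_box_prod N (fun mu a => (('C(a, l mu) * 'C(i mu, a))%N%:R : int) * (-1) ^+ (a - l mu)%N)).
apply: eq_bigr => mu _; exact: sumB1.
Qed.

Lemma mi_add_subK (i k : mi m) : mi_le i k -> mi_add i (mi_sub k i) = k.
Proof. move=> /mi_leP H; apply/ffunP => mu; rewrite !ffunE subnKC //. Qed.

Lemma mi_add_le (i j k : mi m) : mi_add i j = k -> mi_le i k.
Proof. by move=> <-; apply/mi_leP => mu; rewrite ffunE leq_addr. Qed.

Lemma mi_add_inj (i j j' : mi m) : mi_add i j = mi_add i j' -> j = j'.
Proof.
move=> /ffunP H; apply/ffunP => mu; have := H mu; rewrite !ffunE; exact: addnI.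
Qed.

Lemma mi_sub_comp (l k i : mi m) : mi_le l k -> mi_le k i ->
  mi_add (mi_sub i k) (mi_sub k l) = mi_sub i l.
Proof.
move=> /mi_leP h1 /mi_leP h2; apply/ffunP => mu; rewrite !ffunE.
have a1 := h1 mu; have a2 := h2 mu.
by rewrite addnBA // subnK.
Qed.

Lemma mi_subnn (k : mi m) : mi_sub k k = [ffun _ => 0%N].
Proof. by apply/ffunP => mu; rewrite !ffunE subnn. Qed.

Lemma le_lt (i k : mi m) N : mi_le i k -> (forall mu, k mu < N)%N -> (forall mu, i mu < N)%N.
Proof. by move=> /mi_leP h1 h2 mu; exact: leq_ltn_trans (h1 mu) (h2 mu). Qed.

Lemma box_change (W : zmodType) n n' (i : mi m) (F : mi m -> W) :
  (forall mu, i mu < n)%N -> (forall mu, i mu < n')%N ->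
  (forall l, ~~ mi_le l i -> F l = 0) ->
  \sum_(l <- box m n) F l = \sum_(l <- box m n') F l.
Proof.
move=> hn hn' HF.
have E r : \sum_(l <- r) F l = \sum_(l <- r | mi_le l i) F l.
  rewrite [RHS]big_mkcond; apply: eq_bigr => l _; case: ifP => // /negbT /HF -> //.
rewrite (E (box m n)) (E (box m n')) -[LHS]big_filter -[RHS]big_filter; apply: perm_big; apply: uniq_perm; try (apply: filter_uniq; exact: uniq_box).
move=> l; rewrite !mem_filter !mem_box; case hl: (mi_le l i) => //=.
have h1 := le_lt _ _ _ hl hn; have h2 := le_lt _ _ _ hl hn'.
have -> : [forall mu, (l mu < n)%N] by apply/forallP.
have -> : [forall mu, (l mu < n')%N] by apply/forallP.
by [].
Qed.

Lemma scal1 (W : zmodType) (x : W) a b (s : int) :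
  x *+ a *+ b *~ s = x *~ ((a * b)%N%:R * s).
Proof. by rewrite mulrzA mulrz_nat mulrnA. Qed.

Lemma scal2 (W : zmodType) (x : W) a b (s : int) :
  x *+ a *~ s *+ b = x *~ ((a * b)%N%:R * s).
Proof.
rewrite -(mulrz_nat b (x *+ a *~ s)) -(mulrz_nat a x) -!mulrzA.
by congr (x *~ _); rewrite natrM; ring.
Qed.
End MI2.
Section Main.
Variables (V : zmodType) (m : nat) (Aset : finType) (D : 'I_m -> {additive V -> V}).
Hypothesis D_comm : forall (mu nu : 'I_m) (x : V), D mu (D nu x) = D nu (D mu x).

Lemma eps_sumE (phi : mi m -> Aset -> V) alpha (i : mi m) N : (forall mu, i mu < N)%N ->
  eps_sum D phi alpha i = \sum_(l <- box m N) Dmi D (mi_sub i l) (phi l alpha) *+ mi_binom i l.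
Proof.
move=> hN; rewrite /eps_sum.
transitivity (\sum_(l <- box m (bound i)) Dmi D (mi_sub i l) (phi l alpha) *+ mi_binom i l).
  apply: eq_bigr => l _; rewrite /eps; case: ifP => // /negbT /binom0 ->.
  by rewrite mulr0n.
apply: (@box_change _ _ _ _ i) => //; first exact: bound_lt.
by move=> l /binom0 ->; rewrite mulr0n.
Qed.

Lemma phi_formulaE (zeta : Aset -> mi m -> V) (k : mi m) alpha :
  phi_formula D zeta k alpha = \sum_(i <- box m (bound k))
    Dmi D (mi_sub k i) (zeta alpha i) *+ mi_binom k i *~ (-1) ^+ mi_abs (mi_sub k i).
Proof.
rewrite /phi_formula; apply: eq_bigr => i _.
case: (boolP (mi_le i k)) => hik.
  rewrite big_mkcond (bigD1_seq (mi_sub k i)) ?uniq_box //=; last first.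
    rewrite mem_box; apply/forallP => mu; rewrite ffunE.
    exact: leq_ltn_trans (leq_subr _ _) (bound_lt _ k mu).
  rewrite mi_add_subK // eqxx big1 ?addr0 // => j hj.
  case: eqP => // hE; exfalso.
  move/eqP: hj; apply; apply: (@mi_add_inj _ i); by rewrite hE mi_add_subK.
rewrite binom0 // mulr0n mul0rz big1 // => j /eqP hE.
by move: hik; rewrite (mi_add_le _ _ _ _ hE).
Qed.


Lemma invA (zeta : Aset -> mi m -> V) (phi : mi m -> Aset -> V)
  (H : forall a i, zeta a i = eps_sum D phi a i) (k : mi m) alpha :
  phi_formula D zeta k alpha = phi k alpha.
Proof.
set N := bound k. rewrite phi_formulaE.
transitivity (\sum_(i <- box m N) \sum_(l <- box m N) Dmi D (mi_sub k l) (phi l alpha) *~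
   ((mi_binom i l * mi_binom k i)%:R * (-1) ^+ mi_abs (mi_sub k i))).
  apply: eq_bigr => i _; case: (boolP (mi_le i k)) => hik; last first.
    by rewrite binom0 // mulr0n mul0rz big1 // => l _; rewrite muln0 mul0r mulr0z.
  rewrite H (eps_sumE _ _ _ N); last exact: le_lt _ _ _ _ hik (bound_lt _ k).
  rewrite Dmi_sum -sumrMnl mulrz_suml; apply: eq_bigr => l _.
  case: (boolP (mi_le l i)) => hli; last first.
    by rewrite binom0 // mulr0n Dmi_0 mul0rn mul0rz mul0n mul0r mulr0z.
  by rewrite DmiMn (Dmi_comp _ _ _ D_comm) (mi_sub_comp _ _ _ _ hli hik) scal1.
rewrite exchange_big /=.
transitivity (\sum_(l <- box m N) Dmi D (mi_sub k l) (phi l alpha) *~ ((l == k)%:R)).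
  apply: eq_bigr => l _; rewrite -mulrz_sumr identA //; exact: bound_lt.
rewrite (bigD1_seq k) ?uniq_box //=; last first.
  by rewrite mem_box; apply/forallP => mu; exact: bound_lt.
rewrite eqxx mulr1z mi_subnn Dmi0 big1 ?addr0 // => l /negbTE ->.
by rewrite mulr0z.
Qed.

Lemma invB (zeta : Aset -> mi m -> V) (phi : mi m -> Aset -> V)
  (H : forall k a, phi k a = phi_formula D zeta k a) alpha (i : mi m) :
  eps_sum D phi alpha i = zeta alpha i.
Proof.
set N := bound i. rewrite (eps_sumE _ _ _ N); last exact: bound_lt.
transitivity (\sum_(k <- box m N) \sum_(l <- box m N) Dmi D (mi_sub i l) (zeta alpha l) *~
   ((mi_binom k l * mi_binom i k)%:R * (-1) ^+ mi_abs (mi_sub k l))).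
  apply: eq_bigr => k _; case: (boolP (mi_le k i)) => hki; last first.
    by rewrite binom0 // mulr0n big1 // => l _; rewrite muln0 mul0r mulr0z.
  have E := @box_change _ _ (bound k) N k (fun l =>
     Dmi D (mi_sub k l) (zeta alpha l) *+ mi_binom k l *~ (-1) ^+ mi_abs (mi_sub k l))
     (bound_lt _ k) (le_lt _ _ _ _ hki (bound_lt _ i))
     (fun l hl => ltac:(by rewrite /= binom0 // mulr0n mul0rz)).
  rewrite H phi_formulaE E.
  rewrite Dmi_sum -sumrMnl; apply: eq_bigr => l _.
  case: (boolP (mi_le l k)) => hlk; last first.
    by rewrite binom0 // mulr0n mul0rz Dmi_0 mul0rn mul0n mul0r mulr0z.
  by rewrite DmiMz DmiMn (Dmi_comp _ _ _ D_comm) (mi_sub_comp _ _ _ _ hlk hki) scal2.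
rewrite exchange_big /=.
transitivity (\sum_(l <- box m N) Dmi D (mi_sub i l) (zeta alpha l) *~ ((l == i)%:R)).
  apply: eq_bigr => l _; rewrite -mulrz_sumr identB //; exact: bound_lt.
rewrite (bigD1_seq i) ?uniq_box //=; last first.
  by rewrite mem_box; apply/forallP => mu; exact: bound_lt.
rewrite eqxx mulr1z mi_subnn Dmi0 big1 ?addr0 // => l /negbTE ->.
by rewrite mulr0z.
Qed.

End Main.

Theorem mainTheorem16 (V : zmodType) (m : nat) (Aset : finType)
  (D : 'I_m -> {additive V -> V})
  (D_comm : forall (mu nu : 'I_m) (x : V), D mu (D nu x) = D nu (D mu x))
  (zeta : Aset -> mi m -> V) :
  (exists phi : mi m -> Aset -> V,
      forall alpha i, zeta alpha i = eps_sum D phi alpha i) /\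
  (forall phi : mi m -> Aset -> V,
      (forall alpha i, zeta alpha i = eps_sum D phi alpha i) <->
      (forall k alpha, phi k alpha = phi_formula D zeta k alpha)).
Proof.
split.
  exists (phi_formula D zeta) => alpha i.
  by rewrite (@invB _ _ _ _ D_comm zeta (phi_formula D zeta) (fun _ _ => erefl)).
move=> phi; split.
  by move=> H k alpha; rewrite (@invA _ _ _ _ D_comm _ _ H).
by move=> H alpha i; rewrite (@invB _ _ _ _ D_comm _ _ H).
Qed.
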